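(* Let $\Sigma=(\mathbb{N}_0,X,U,\mathscr{U},\phi)$ be a control system as in the standing setup and let $Q\subset X$ be a nonempty compact set. Then $Q$ is finitely equi-invariant in the mean if and only if $Q$ has bounded invariance complexity in the mean.
   Context: Standing setup: $(X,d)$ is a metric space, $U$ is a compact metric space, and $F:X\times U\to X$ is a map such that $F_u:=F(\cdot,u)$ is continuous for every $u\in U$. Let $\mathscr U=U^{\mathbb N_0}$ with the product topology. For $\omega=(\omega_0,\omega_1,\dots)\in\mathscr U$, $x\in X$, set $\phi(0,x,\omega)=x$ and $\phi(k,x,\omega)=F_{\omega_{k-1}}\circ\cdots\circ F_{\omega_0}(x)$ for $k\ge1$. It is assumed that $\phi:\mathbb N_0\times X\times\mathscr U\to X$ is continuous. Notation: $\mathbb N=\{1,2,\dots\}$; $B(x,\delta)$ is the open ball; $d(y,Q)=\inf_{q\in Q}d(y,q)$. Finite equi-invariance in the mean: a point $x\in Q$ is a finitely equi-invariant point in the mean of $Q$ if for every $\varepsilon>0$ there exist $\delta>0$ and a finite set $F\subset\mathscr U$ such that for every $y\in B(x,\delta)\cap Q$ there is $\omega\in F$ with $\frac1n\sum_{i=0}^{n-1}d(\phi(i,y,\omega),Q)<\varepsilon$ for all $n\in\mathbb N$. $Q$ is finitely equi-invariant in the mean if every point of $Q$ is such a point. Invariance complexity in the mean: for $\omega\in\mathscr U$, $n\in\mathbb N$, $\varepsilon>0$ let $\hat Q^\varepsilon_{n,\omega}=\{x\in Q:\max_{1\le k\le n}\frac1k\sum_{i=0}^{k-1}d(\phi(i,x,\omega),Q)<\varepsilon\}$.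 A set $F\subset\mathscr U$ is $(n,\varepsilon,Q)$-spanning in the mean if $Q=\bigcup_{\omega\in F}\hat Q^\varepsilon_{n,\omega}$, and $\hat r_{inv}(n,\varepsilon,Q)$ is the minimal cardinality of such a set ($=\infty$ if none exists). $Q$ has bounded invariance complexity in the mean if for every $\varepsilon>0$ there is $C>0$ with $\hat r_{inv}(n,\varepsilon,Q)\le C$ for all $n\in\mathbb N$. *)

(* Defs.v *)
From HB Require Import structures.
From mathcomp Require Import all_boot all_order all_algebra.
From mathcomp Require Import all_classical all_reals all_analysis.
From mathcomp Require Import finmap.
Set Implicit Arguments. Unset Strict Implicit. Unset Printing Implicit Defensive.
Import Order.TTheory GRing.Theory Num.Theory.
Local Open Scope classical_set_scope.
Local Open Scope ring_scope.

Definition controls (U : Type) := {ptws nat -> U}.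

Definition is_metric_of {R : realType} {X : pseudoMetricType R}
    (d : X -> X -> R) : Prop :=
  [/\ (forall x y, 0 <= d x y),
      (forall x y, d x y = 0 <-> x = y),
      (forall x y, d x y = d y x),
      (forall x y z, d x z <= d x y + d y z) &
      (forall x (e : R), ball x e = [set y | d x y < e])].

Fixpoint phi {X U : Type} (F : X -> U -> X) (k : nat) (x : X) (w : controls U)
    : X :=
  match k with
  | 0 => x
  | k'.+1 => F (phi F k' x w) (w k')
  end.

Definition dist_set {R : realType} {X : Type} (d : X -> X -> R) (y : X)
    (Q : set X) : R :=
  inf [set d y q | q in Q].

Definition mean_dist {R : realType} {X : Type} {U : choiceType} (d : X -> X -> R)
    (F : X -> U -> X) (Q : set X) (n : nat) (y : X) (w : controls U) : R :=
  n%:R^-1 * \sum_(i < n) dist_set d (phi F i y w) Q.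

Definition fin_equi_inv_point_mean {R : realType} {X : Type} {U : choiceType}
    (d : X -> X -> R) (F : X -> U -> X) (Q : set X) (x : X) : Prop :=
  forall eps : R, 0 < eps ->
    exists delta : R, 0 < delta /\
    exists Fs : {fset controls U},
      forall y, Q y -> d x y < delta ->
        exists2 w, w \in Fs &
          forall n : nat, (1 <= n)%N -> mean_dist d F Q n y w < eps.

Definition fin_equi_inv_mean {R : realType} {X : Type} {U : choiceType}
    (d : X -> X -> R) (F : X -> U -> X) (Q : set X) : Prop :=
  forall x, Q x -> fin_equi_inv_point_mean d F Q x.

Definition Qhat {R : realType} {X : Type} {U : choiceType} (d : X -> X -> R)
    (F : X -> U -> X) (Q : set X) (n : nat) (eps : R) (w : controls U)
    : set X :=
  [set x | Q x /\
    forall k : nat, (1 <= k <= n)%N -> mean_dist d F Q k x w < eps].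

Definition spanning_mean {R : realType} {X : Type} {U : choiceType} (d : X -> X -> R)
    (F : X -> U -> X) (Q : set X) (n : nat) (eps : R) (S : set (controls U))
    : Prop :=
  Q = \bigcup_(w in S) Qhat d F Q n eps w.

(** \hat r_inv(n, eps, Q): the minimal cardinality of a spanning set, +oo if
    there is none (an infinite spanning set has infinite cardinality, so only
    finite ones matter for the minimum; inf of the empty set is +oo). *)
Definition r_inv_mean {R : realType} {X : Type} {U : choiceType} (d : X -> X -> R)
    (F : X -> U -> X) (Q : set X) (n : nat) (eps : R) : \bar R :=
  ereal_inf [set (((#|` S |)%fset)%:R)%:E | S in
               [set S : {fset controls U} |
                  spanning_mean d F Q n eps [set` S]%fset]].

Definition bounded_inv_complexity_mean {R : realType} {X : Type} {U : choiceType}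
    (d : X -> X -> R) (F : X -> U -> X) (Q : set X) : Prop :=
  forall eps : R, 0 < eps ->
    exists C : R, 0 < C /\
      forall n : nat, (1 <= n)%N -> (r_inv_mean d F Q n eps <= C%:E)%E.

(* Main.v *)
Require Import Defs.
From HB Require Import structures.
From mathcomp Require Import all_boot all_order all_algebra.
From mathcomp Require Import all_classical all_reals all_analysis.
From mathcomp Require Import finmap.
From mathcomp Require Import lra.
Import Order.TTheory GRing.Theory Num.Theory numFieldNormedType.Exports.
Local Open Scope classical_set_scope.
Local Open Scope ring_scope.

Definition pointedX (T : topologicalType) (x0 : T) : Type := T.
HB.instance Definition _ (T : topologicalType) (x0 : T) := Topological.on (pointedX T x0).
HB.instance Definition _ (T : topologicalType) (x0 : T) := isPointed.Build (pointedX T x0) x0.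
Lemma cc (T : topologicalType) (A : set T) : compact A -> A !=set0 -> cover_compact A.
Proof. move=> cA [x0 _].
have := compact_cover (pointedX T x0). move=> h.
have : @compact (pointedX T x0) A by [].
rewrite h. exact.
Qed.

Lemma dball_open (R : realType) (X : pseudoMetricType R) (d : X -> X -> R) x r :
  is_metric_of d -> open [set y | d x y < r].
Proof.
move=> [d0 d00 dsym dtri dball]; rewrite openE => z /= hz.
have s0 : 0 < r - d x z by rewrite subr_gt0.
apply: filterS (nbhsx_ballx z _ s0) => y; rewrite dball /= => hy.
by apply: le_lt_trans (dtri x z y) _; rewrite -ltrBrDl.
Qed.

Lemma fwd (R : realType) (X : pseudoMetricType R)
    (d : X -> X -> R) (U : pseudoMetricType R) (F : X -> U -> X)
    (Q : set X) :
  is_metric_of d -> compact Q -> Q !=set0 ->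
  fin_equi_inv_mean d F Q -> bounded_inv_complexity_mean d F Q.
Proof.
move=> dm cQ Q0 H e e0.
have [G HG] : {G : X -> R * {fset controls U} & forall x, Q x ->
   0 < (G x).1 /\ forall y, Q y -> d x y < (G x).1 ->
     exists2 w, w \in (G x).2 &
       forall n : nat, (1 <= n)%N -> mean_dist d F Q n y w < e}.
  apply: (@choice X (R * {fset controls U})%type (fun x p => Q x -> 0 < p.1 /\ forall y, Q y -> d x y < p.1 ->
     exists2 w, w \in p.2 &
       forall n : nat, (1 <= n)%N -> mean_dist d F Q n y w < e)) => x.
  case: (pselect (Q x)) => Qx.
    have [del [del0 [Fs HFs]]] := H x Qx e e0.
    by exists (del, Fs).
  by exists (1, fset0).
have {}cQ := @cc _ Q cQ Q0.
have cov0 : Q `<=` cover Q (fun x => [set y | d x y < (G x).1]).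
  move=> y Qy; exists y => //=.
  case: dm => _ d00 _ _ _; have -> : d y y = 0 by apply/d00.
  by case: (HG y Qy).
have [D' D'sub cov] := cQ X Q (fun x => [set y | d x y < (G x).1])
  (fun x _ => @dball_open _ _ d x _ dm) cov0.
pose Fs := (\bigcup_(x <- D') (G x).2)%fset.
exists (#|` Fs|%fset%:R + 1); split; first by rewrite ltr_wpDl.
move=> n n1.
have sp : spanning_mean d F Q n e [set` Fs]%fset.
  apply/seteqP; split => y; last by move=> [w _ []].
  move=> Qy; have [x /= xD hx] := cov y Qy.
  have Qx : Q x by have := D'sub _ xD; rewrite in_setE.
  have [_ Hx] := HG x Qx.
  have [w wG hw] := Hx y Qy hx.
  exists w.
    by apply/bigfcupP; exists x => //; rewrite xD.
  by split => // k /andP [k1 _]; apply: hw.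
apply: le_trans (ereal_inf_lbound _) _.
  by exists Fs.
by rewrite lee_fin lerDl.
Qed.

Definition proj2c (R : realType) (U : pseudoMetricType R) (j : nat)
  (W : {ptws (nat * nat) -> U}) : controls U := fun i => W (i, j).

Lemma proj2c_cont (R : realType) (U : pseudoMetricType R) j :
  continuous (@proj2c R U j).
Proof.
move=> W; refine (proj2 (@pointwise_cvgP nat U (@proj2c R U j @ W) (@proj2c R U j W) ltac:(apply: fmap_filter; apply: nbhs_filter)) _) => t.
have := (@pointwise_cvgP _ _ (nbhs W) W _).1 (@cvg_id _ (nbhs W)) (t, j).
exact.
Qed.

Lemma dist_lip (R : realType) (X : Type) (d : X -> X -> R) (Q : set X) y z :
  (forall x y, 0 <= d x y) -> (forall x y z, d x z <= d x y + d y z) ->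
  Q !=set0 -> dist_set d y Q <= d y z + dist_set d z Q.
Proof.
move=> d0 dtri Q0.
rewrite -lerBlDl; apply: lb_le_inf.
  by case: Q0 => q Qq; exists (d z q), q.
move=> _ [q Qq <-]; rewrite lerBlDl.
apply: le_trans (dtri y z q); apply: ge_inf.
  by exists 0 => _ [p _ <-].
by exists q.
Qed.

Lemma dist_cont (R : realType) (X : pseudoMetricType R) (d : X -> X -> R) (Q : set X) :
  is_metric_of d -> Q !=set0 -> continuous (fun y : X => (dist_set d y Q : R)).
Proof.
move=> [d0 d00 dsym dtri dball] Q0 y.
apply/cvgrPdist_lt => eps eps0.
apply: filterS (nbhsx_ballx y _ eps0) => z; rewrite dball /= => hz.
have h1 := @dist_lip _ _ d Q y z d0 dtri Q0.
have h2 := @dist_lip _ _ d Q z y d0 dtri Q0.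
rewrite dsym in h2.
rewrite ltr_norml; apply/andP; split; lra.
Qed.

Lemma phi_cont (R : realType) (X : pseudoMetricType R) (U : pseudoMetricType R)
  (F : X -> U -> X) (i : nat) (y : X) :
  (forall k : nat, continuous (fun p : X * controls U => phi F k p.1 p.2)) ->
  continuous (fun w : controls U => phi F i y w).
Proof.
move=> hphi w.
have h := @continuous_comp _ _ _ (fun w : controls U => (y, w))
  (fun p : X * controls U => phi F i p.1 p.2) w.
apply: h; last exact: hphi.
exact: (cvg_pair (cvg_cst y) (@cvg_id _ (nbhs w))).
Qed.

Lemma mean_cont (R : realType) (X : pseudoMetricType R) (d : X -> X -> R)
  (U : pseudoMetricType R) (F : X -> U -> X) (Q : set X) k y :
  is_metric_of d -> Q !=set0 ->
  (forall k : nat, continuous (fun p : X * controls U => phi F k p.1 p.2)) ->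
  continuous (fun w : controls U => mean_dist d F Q k y w).
Proof.
move=> dm Q0 hphi w; rewrite /mean_dist.
have nF : ProperFilter (nbhs w) := @nbhs_pfilter _ w.
have hs : (fun w : controls U => \sum_(i < k) dist_set d (phi F i y w) Q) @ w
    --> \sum_(i < k) dist_set d (phi F i y w) Q.
  elim: k => [|k IH].
    have -> : (fun w : controls U => \sum_(i < 0) dist_set d (phi F i y w) Q)
      = fun=> 0 by apply: funext => ?; rewrite big_ord0.
    rewrite big_ord0; exact: cvg_cst.
  have -> : (fun w : controls U => \sum_(i < k.+1) dist_set d (phi F i y w) Q)
      = (fun w : controls U => \sum_(i < k) dist_set d (phi F i y w) Q)
        + (fun w => dist_set d (phi F k y w) Q).
    by apply: funext => ?; rewrite big_ord_recr.
  rewrite big_ord_recr /=.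
  apply: cvgD => //.
  apply: (@continuous_comp _ _ _ (fun w => phi F k y w) (fun x => dist_set d x Q)).
    exact: phi_cont.
  exact: dist_cont.
apply: cvgMl_tmp; exact: hs.
Qed.

Lemma bwd (R : realType) (X : pseudoMetricType R)
    (d : X -> X -> R) (U : pseudoMetricType R) (F : X -> U -> X)
    (Q : set X) :
  is_metric_of d -> compact [set: U] ->
  (forall k : nat,
     continuous (fun p : X * controls U => phi F k p.1 p.2)) ->
  Q !=set0 -> bounded_inv_complexity_mean d F Q -> fin_equi_inv_mean d F Q.
Proof.
move=> dm cU hphi Q0 B x Qx e e0.
have e20 : 0 < e / 2 by lra.
have [C [C0 HC]] := B _ e20.
pose M := Num.Def.archi_bound (C + 1).
have M_gt : C + 1 < M%:R by apply: archi_boundP; lra.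
have hS : forall n : nat, exists S : {fset controls U}, (1 <= n)%N ->
    spanning_mean d F Q n (e / 2) [set` S]%fset /\ (#|` S| < M)%N.
  move=> n; case: (leqP 1 n) => n1; last by exists fset0.
  have : (r_inv_mean d F Q n (e / 2) < (C + 1)%:E)%E.
    by apply: le_lt_trans (HC n n1) _; rewrite lte_fin; lra.
  move/ereal_inf_lt => [_ [S SS <-]] hlt; exists S => _; split => //.
  rewrite lte_fin in hlt; rewrite -(ltr_nat R); exact: lt_trans hlt M_gt.
have [S HS] := choice hS.
have [w0 _] : exists w0 : controls U, True.
  have [sp1 _] := HS 1%N (leqnn 1).
  have : (\bigcup_(w in [set` S 1%N]%fset) Qhat d F Q 1 (e / 2) w) x.
    by rewrite -sp1.
  by case=> w _ _; exists w.
pose Om (n : nat) : {ptws (nat * nat) -> U} := fun p => nth w0 (S n) p.2 p.1.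
pose L n := \bigcap_(y in Q) \bigcup_(j in [set: 'I_M])
   \bigcap_(k in [set k | (1 <= k <= n)%N])
     [set W : {ptws (nat * nat) -> U} | mean_dist d F Q k y (@proj2c R U j W) <= e / 2].
have Lcl : forall n, closed (L n).
  move=> n; apply: closed_bigI => y Qy; apply: closed_bigcup.
    exact: finite_finset.
  move=> j _; apply: closed_bigI => k _.
  have hc : continuous (fun W : {ptws (nat * nat) -> U} =>
      mean_dist d F Q k y (@proj2c R U j W)).
    move=> W.
    have h := @continuous_comp _ _ _ (@proj2c R U j)
      (fun w : controls U => mean_dist d F Q k y w) W.
    apply: h; first exact: proj2c_cont.
    exact: mean_cont.
  exact: (preimage_closed (fun W _ => hc W) (@closed_le _ (e / 2))).
have Lm : forall n m, (1 <= n)%N -> (n <= m)%N -> L n (Om m).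
  move=> n m n1 nm y Qy.
  have m1 : (1 <= m)%N by apply: leq_trans nm.
  have [spm cardm] := HS m m1.
  have : (\bigcup_(w in [set` S m]%fset) Qhat d F Q m (e / 2) w) y.
    by rewrite -spm.
  case=> w wS [_ hw].
  have jM : (index w (S m) < M)%N.
    apply: (leq_trans _ (ltnW cardm)); rewrite card_fset_sum1 sum1_size index_mem; exact: wS.
  exists (Ordinal jM) => // k /= /andP [k1 kn].
  have -> : @proj2c R U (Ordinal jM) (Om m) = w.
    by apply: funext => i; rewrite /proj2c /Om /= nth_index.
  by apply/ltW/hw; rewrite k1 (leq_trans kn nm).
have cT : compact [set: {ptws (nat * nat) -> U}].
  have := @tychonoff (nat * nat)%type (fun _ => U) (fun _ => setT) (fun _ => cU).
  have -> : [set f : nat * nat -> U | forall i, setT (f i)] = setT.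
    by apply/seteqP; split.
  exact.
have [G [_ clG]] := cT (Om @ \oo) (fmap_proper_filter _ _) filterT.
have GL : forall n, (1 <= n)%N -> L n G.
  move=> n n1; apply: (Lcl n) => Bs nB.
  apply: (clG (L n) Bs) nB.
  by apply: filterS (nbhs_infty_ge n) => m nm; exact: Lm.
exists 1; split => //.
exists (seq_fset tt (map (fun j : 'I_M => @proj2c R U j G) (enum 'I_M))).
move=> y Qy _.
have [j hj] : exists j : 'I_M, forall k, (1 <= k)%N ->
    mean_dist d F Q k y (@proj2c R U j G) <= e / 2.
  case: (pselect (exists j : 'I_M, forall k, (1 <= k)%N ->
    mean_dist d F Q k y (@proj2c R U j G) <= e / 2)) => // hn.
  have hK : forall j : 'I_M, exists k, (1 <= k)%N /\
      e / 2 < mean_dist d F Q k y (@proj2c R U j G).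
    move=> j; apply: contrapT => hj; apply: hn; exists j => k k1.
    by rewrite leNgt; apply/negP => hlt; apply: hj; exists k; split.
  have [K HK] := choice hK.
  pose n := (\max_(j : 'I_M) K j).+1.
  have [j _ hj] := GL n isT y Qy.
  have [k1 hk] := HK j.
  have := hj (K j); rewrite /= k1 /=.
  move=> /(_ (leq_trans (leq_bigmax j) (leqnSn _))).
  by rewrite leNgt hk.
exists (@proj2c R U j G).
  by rewrite seq_fsetE; apply: map_f; exact: mem_enum.
move=> n n1; apply: le_lt_trans (hj n n1) _; lra.
Qed.

Theorem mainTheorem2 (R : realType) (X : pseudoMetricType R)
    (d : X -> X -> R) (U : pseudoMetricType R) (F : X -> U -> X)
    (Q : set X) :
  is_metric_of d ->
  hausdorff_space U -> compact [set: U] ->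
  (forall u : U, continuous (fun x : X => F x u)) ->
  (forall k : nat,
     continuous (fun p : X * controls U => phi F k p.1 p.2)) ->
  Q !=set0 -> compact Q ->
  fin_equi_inv_mean d F Q <-> bounded_inv_complexity_mean d F Q.
Proof.
move=> dm _ cU _ hphi Q0 cQ; split.
  exact: fwd.
exact: bwd.
Qed.
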